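(* Consider the online multiple testing protocol described in the context, in a stationary environment in which the true states $Y_1,Y_2,\dots$ are i.i.d. $\mathrm{Bernoulli}(1-\pi)$ for a constant $\pi\in(0,1)$ (so $\mathbb{P}(Y_t=0)=\pi$). Let $\beta\in(0,1]$ and $\lambda_\beta:=G^{-1}(\beta)>0$. Suppose the algorithm maintains minimum detection power $\beta$, i.e. $G(\lambda_t)\ge\beta$, equivalently $\lambda_t\ge\lambda_\beta$, almost surely for all $t$. Then for every $T\ge1$ and all $a,b>0$, $$\mathbb{E}[\mathrm{Regret}_T(a,b)]\ \ge\ a\,\pi\,\lambda_\beta\,T=\Omega(T),$$ and moreover $$\liminf_{T\to\infty}\frac1T\,\mathrm{Regret}_T(a,b)\ \ge\ a\,\pi\,\lambda_\beta\quad\text{almost surely.}$$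
   Context: Online multiple testing protocol: at each round $t=1,2,\dots$ the environment has a true state $Y_t\in\{0,1\}$ ($0$ = null, $1$ = alternative) and reveals a $p$-value $p_t\in[0,1]$; conditionally on the states and on the past, $p_t\sim\mathrm{Uniform}[0,1]$ if $Y_t=0$ and $p_t\sim G$ if $Y_t=1$, independently of past $p$-values and decisions. Here $G:[0,1]\to[0,1]$ is a continuous, strictly increasing CDF with $G(0)=0$, $G(1)=1$. With $\mathcal{F}_{t-1}=\sigma((p_s,\lambda_s,\delta_s):s\le t-1)$, the algorithm chooses an $\mathcal{F}_{t-1}$-measurable threshold $\lambda_t\in[0,1]$ and decides $\delta_t=\mathbf{1}\{p_t\le\lambda_t\}$ (reject iff $\delta_t=1$). Define false positives $V_T=\sum_{t=1}^T\mathbf{1}\{Y_t=0,\delta_t=1\}$, false negatives $M_T=\sum_{t=1}^T\mathbf{1}\{Y_t=1,\delta_t=0\}$, and for weights $a,b>0$ the Weighted Regret $\mathrm{Regret}_T(a,b)=a V_T+b M_T$. *)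

(* Defs.v *)
From HB Require Import structures.
From mathcomp Require Import all_boot all_order all_algebra.
From mathcomp Require Import all_classical all_reals all_analysis.
Set Implicit Arguments. Unset Strict Implicit. Unset Printing Implicit Defensive.
Import Order.TTheory GRing.Theory Num.Theory.
Import numFieldNormedType.Exports.
Local Open Scope classical_set_scope.
Local Open Scope ring_scope.

(* Rounds are indexed t = 0,1,2,... (round t here = round t+1 of the paper). *)

Section Defs.
Context {R : realType} {T : Type}.

Definition decision (p lam : nat -> T -> R) (t : nat) (w : T) : bool :=
  p t w <= lam t w.

Definition false_pos (Y : nat -> T -> bool) (p lam : nat -> T -> R) (n : nat) (w : T) : R :=
  \sum_(t < n) ((~~ Y t w) && decision p lam t w)%:R.

Definition false_neg (Y : nat -> T -> bool) (p lam : nat -> T -> R) (n : nat) (w : T) : R :=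
  \sum_(t < n) (Y t w && ~~ decision p lam t w)%:R.

Definition weighted_regret (a b : R) Y p lam (n : nat) (w : T) : R :=
  a * false_pos Y p lam n w + b * false_neg Y p lam n w.

(* generators of the past sigma-algebra F_{t-1} = sigma(p_s, lambda_s, delta_s : s < t) *)
Definition past_gen (p lam : nat -> T -> R) (t : nat) : set (set T) :=
  [set A | exists s x, (s < t)%N /\ A = [set w | p s w <= x]] `|`
  [set A | exists s x, (s < t)%N /\ A = [set w | lam s w <= x]] `|`
  [set A | exists s, (s < t)%N /\ A = [set w | decision p lam s w]].

Definition states_gen (Y : nat -> T -> bool) : set (set T) :=
  [set A | exists s b, A = [set w | Y s w = b]].

Definition cond_sigma Y (p lam : nat -> T -> R) (t : nat) : set (set T) :=
  <<s states_gen Y `|` past_gen p lam t >>.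

End Defs.

(* The online multiple testing protocol, in the stationary environment:
   Y_t i.i.d. Bernoulli(1 - pi); conditionally on all states and on the past,
   p_t ~ Unif[0,1] if Y_t = 0 and p_t ~ G if Y_t = 1; lambda_t predictable. *)
Definition stationary_protocol {R : realType} (d : measure_display)
  (T : measurableType d) (P : probability T R) (pi : R) (G : R -> R)
  (Y : nat -> T -> bool) (p lam : nat -> T -> R) : Prop :=
  (forall t, measurable [set w | Y t w = true]) /\
      (forall t, measurable_fun setT (p t)) /\
      (forall t, measurable_fun setT (lam t)) /\
      (forall t w, 0 <= p t w <= 1) /\
      (forall t w, 0 <= lam t w <= 1) /\
      (forall (n : nat) (bs : nat -> bool),
          P [set w | forall s, (s < n)%N -> Y s w = bs s] =
          (\prod_(s < n) (if bs s then 1 - pi else pi))%:E) /\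
      (forall t (B : set R), measurable B -> <<s past_gen p lam t >> (lam t @^-1` B)) /\
      (forall t A x, cond_sigma Y p lam t A -> 0 <= x <= 1 ->
          P (A `&` [set w | Y t w = false] `&` [set w | p t w <= x]) =
            (x%:E * P (A `&` [set w | Y t w = false]))%E /\
          P (A `&` [set w | Y t w = true] `&` [set w | p t w <= x]) =
            ((G x)%:E * P (A `&` [set w | Y t w = true]))%E).

(* Main.v *)
Require Import Defs.
From HB Require Import structures.
From mathcomp Require Import all_boot all_order all_algebra.
From mathcomp Require Import all_classical all_reals all_analysis.
From mathcomp Require Import measurable_realfun.
From mathcomp Require Import ring lra.
Set Implicit Arguments. Unset Strict Implicit. Unset Printing Implicit Defensive.
Import Order.TTheory GRing.Theory Num.Theory.
Import numFieldNormedType.Exports.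
Local Open Scope classical_set_scope.
Local Open Scope ring_scope.


Section Ex.
Context {R : realType} {d : measure_display} {T : measurableType d} (P : probability T R).

Definition bmf (f : T -> R) := measurable_fun setT f /\ exists M, forall w, `|f w| <= M.
Definition Ex (f : T -> R) : R := fine ('E_P[f])%E.

Lemma bmf_L1 f : bmf f -> f \in Lfun P 1.
Proof.
move=> [mf [M hM]]; apply/Lfun1_integrable.
apply: measurable_bounded_integrable => //.
  by apply: (le_lt_trans (probability_le1 P measurableT)); rewrite ltry.
exists M; split; first exact: num_real.
by move=> x Mx y _ /=; apply: le_trans (hM y) (ltW Mx).
Qed.

Lemma Ex_E f : bmf f -> 'E_P[f]%E = (Ex f)%:E.
Proof. by move=> bf; rewrite /Ex fineK// expectation_fin_num// bmf_L1. Qed.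

Lemma bmfD f g : bmf f -> bmf g -> bmf (f \+ g).
Proof.
move=> [mf [M hM]] [mg [N hN]]; split; first exact: measurable_funD.
exists (M + N) => w /=; apply: le_trans (ler_normD _ _) _; exact: lerD.
Qed.

Lemma bmfM f g : bmf f -> bmf g -> bmf (f \* g).
Proof.
move=> [mf [M hM]] [mg [N hN]]; split; first exact: measurable_funM.
exists (M * N) => w /=; rewrite normrM; apply: ler_pM => //.
Qed.

Lemma bmf_cst c : bmf (cst c).
Proof. by split => //; exists `|c|. Qed.

Lemma bmfZ c f : bmf f -> bmf (fun w => c * f w).
Proof. by move=> bf; apply: (bmfM (bmf_cst c) bf). Qed.

Lemma bmf_indic A : measurable A -> bmf (\1_A).
Proof.
move=> mA; split; first exact: measurable_indic.
exists 1 => w; rewrite indicE; by case: (w \in A); rewrite ?normr1 ?normr0.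
Qed.

Lemma ExD f g : bmf f -> bmf g -> Ex (f \+ g) = Ex f + Ex g.
Proof. by move=> bf bg; rewrite /Ex expectationD ?bmf_L1// !Ex_E. Qed.

Lemma ExZ c f : bmf f -> Ex (fun w => c * f w) = c * Ex f.
Proof.
move=> bf; rewrite /Ex; have -> : (fun w => c * f w) = c \o* f.
  by apply: funext => w; rewrite /= mulrC.
by rewrite expectationZl ?bmf_L1// Ex_E.
Qed.

Lemma Ex_cst c : Ex (cst c) = c.
Proof. by rewrite /Ex expectation_cst. Qed.

Lemma Ex_indic A : measurable A -> Ex (\1_A) = fine (P A).
Proof. by move=> mA; rewrite /Ex expectation_indic. Qed.

Lemma Ex_ge0 f : (forall w, 0 <= f w) -> 0 <= Ex f.
Proof. by move=> f0; rewrite /Ex fine_ge0// expectation_ge0. Qed.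

Lemma Ex_le f g : bmf f -> bmf g -> (forall w, f w <= g w) -> Ex f <= Ex g.
Proof.
move=> bf bg fg.
have bZ : bmf (fun w => (-1) * f w) by apply: bmfZ.
have e : Ex (g \+ (fun w => (-1) * f w)) = Ex g - Ex f.
  rewrite ExD //.
  have -> : Ex (fun w => (-1) * f w) = (-1) * Ex f by apply: ExZ.
  by rewrite mulN1r.
rewrite -subr_ge0 -e; apply: Ex_ge0 => w /=; rewrite mulN1r subr_ge0; exact: fg.
Qed.

End Ex.

Section Simp.
Context {R : realType} {d : measure_display} {T : measurableType d} (P : probability T R).
Variable S : set (set T).
Hypothesis Smeas : forall A, S A -> measurable A.
Hypothesis SI : forall A B, S A -> S B -> S (A `&` B).

Inductive simp : (T -> R) -> Prop :=
| simp0 : simp (fun _ => 0)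
| simpI A : S A -> simp (\1_A)
| simpD f g : simp f -> simp g -> simp (f \+ g)
| simpZ c f : simp f -> simp (fun w => c * f w).

Lemma simp_ext f g : simp f -> (forall w, f w = g w) -> simp g.
Proof. by move=> sf fg; have <- : f = g by apply: funext. Qed.

Lemma simp_bmf f : simp f -> bmf f.
Proof.
elim=> [|A SA|f1 g1 _ bf _ bg|c f1 _ bf].
- exact: (bmf_cst 0).
- exact/bmf_indic/Smeas.
- exact: bmfD.
- exact: bmfZ.
Qed.

Lemma simp_mulI A g : S A -> simp g -> simp (\1_A \* g).
Proof.
move=> SA; elim=> [|B SB|f1 h _ sf _ sh|c f1 _ sf].
- by apply: (simp_ext simp0) => w /=; rewrite mulr0.
- by apply: (simp_ext (simpI (SI SA SB))) => w; rewrite indicI.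
- by apply: (simp_ext (simpD sf sh)) => w /=; rewrite mulrDr.
- by apply: (simp_ext (simpZ c sf)) => w /=; rewrite mulrCA.
Qed.

Lemma simp_mul f g : simp f -> simp g -> simp (f \* g).
Proof.
elim=> [|A SA|f1 h _ sf _ sh|c f1 _ sf] sg.
- by apply: (simp_ext simp0) => w /=; rewrite mul0r.
- exact: simp_mulI.
- by apply: (simp_ext (simpD (sf sg) (sh sg))) => w /=; rewrite mulrDl.
- by apply: (simp_ext (simpZ c (sf sg))) => w /=; rewrite mulrA.
Qed.

Lemma simp_sum (I : Type) (r : seq I) (F : I -> T -> R) :
  (forall i, simp (F i)) -> simp (fun w => \sum_(i <- r) F i w).
Proof.
move=> sF; elim: r => [|i r IH].
  by apply: (simp_ext simp0) => w; rewrite big_nil.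
by apply: (simp_ext (simpD (sF i) IH)) => w /=; rewrite big_cons.
Qed.

Lemma simp_mart X f : bmf X -> (forall A, S A -> Ex P (\1_A \* X) = 0) ->
  simp f -> Ex P (f \* X) = 0.
Proof.
move=> bX hA; elim=> [|A SA|f1 g sf Hf sg Hg|c f1 sf Hf].
- have -> : ((fun _ : T => 0 : R) \* X) = cst 0 by apply: funext => w /=; rewrite mul0r.
  exact: Ex_cst.
- exact: hA.
- have -> : (f1 \+ g) \* X = (f1 \* X) \+ (g \* X) by apply: funext => w /=; rewrite mulrDl.
  by rewrite ExD ?Hf ?Hg ?addr0 //; apply: bmfM => //; exact: simp_bmf.
- have -> : (fun w => c * f1 w) \* X = (fun w => c * (f1 \* X) w).
    by apply: funext => w /=; rewrite mulrA.
  by rewrite ExZ ?Hf ?mulr0 //; apply: bmfM => //; exact: simp_bmf.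
Qed.

End Simp.

Definition psum {R : realType} {T : Type} (X : nat -> T -> R) n w := \sum_(t < n) X t w.

Lemma psumS {R : realType} {T : Type} (X : nat -> T -> R) n w :
  psum X n.+1 w = psum X n w + X n w.
Proof. by rewrite /psum big_ord_recr. Qed.

Lemma psum0 {R : realType} {T : Type} (X : nat -> T -> R) w : psum X 0 w = 0.
Proof. by rewrite /psum big_ord0. Qed.

Lemma meas_lt {R : realType} {d : measure_display} {T : measurableType d} (f : T -> R) c :
  measurable_fun setT f -> measurable [set w | f w < c].
Proof.
move=> mf; rewrite (_ : [set w | f w < c] = setT `&` f @^-1` `]-oo, c[).
  by apply: mf => //; exact: measurable_itv.
by apply/seteqP; split => w /=; rewrite in_itv /=; [move=> h; split|case].
Qed.

Lemma meas_le {R : realType} {d : measure_display} {T : measurableType d} (f : T -> R) c :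
  measurable_fun setT f -> measurable [set w | f w <= c].
Proof.
move=> mf; rewrite (_ : [set w | f w <= c] = setT `&` f @^-1` `]-oo, c]).
  by apply: mf => //; exact: measurable_itv.
by apply/seteqP; split => w /=; rewrite in_itv /=; [move=> h; split|case].
Qed.

Lemma inv_sq_step {R : realType} (a : R) : 1 <= a ->
  (a ^+ 2)^-1 <= 2 * (a^-1 - (a + 1)^-1).
Proof.
move=> a1; have a0 : 0 < a by apply: lt_le_trans a1.
have a10 : 0 < a + 1 by apply: ltr_wpDr.
have -> : 2 * (a^-1 - (a + 1)^-1) = (a * (a + 1) / 2)^-1.
  by field; apply/andP; split; rewrite gt_eqF.
rewrite lef_pV2 ?posrE ?exprn_gt0 ?divr_gt0 ?mulr_gt0 //.
rewrite ler_pdivrMr //; nra.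
Qed.

Lemma sum_inv_sq {R : realType} k :
  \sum_(i < k) ((i.+1)%:R ^+ 2)^-1 <= 2 - 2 * ((k.+1)%:R)^-1 :> R.
Proof.
elim: k => [|k IH]; first by rewrite big_ord0 invr1; lra.
rewrite big_ord_recr /=.
have h := @inv_sq_step R (k.+1)%:R.
rewrite -[(k.+2)%:R]natr1.
have : 1 <= (k.+1)%:R :> R by rewrite ler1n.
move=> /h {}h. move: IH h; rewrite /GRing.exp /=; set s := \sum_(i < k) _; set u := (k.+1%:R)^-1; set t := (_ ^-1); set v := (_ + 1)^-1; lra.
Qed.

Section SLLN.
Context {R : realType} {d : measure_display} {T : measurableType d} (P : probability T R).
Variable X : nat -> T -> R.
Hypothesis mX : forall t, measurable_fun setT (X t).
Hypothesis X1 : forall t w, `|X t w| <= 1.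
Hypothesis m1 : forall n, Ex P (psum X n \* X n) = 0.
Hypothesis m3 : forall n, Ex P ((fun w => psum X n w ^+ 3) \* X n) = 0.

Lemma bmfX t : bmf (X t).
Proof. by split => //; exists 1. Qed.

Lemma bmf_psum n : bmf (psum X n).
Proof.
elim: n => [|n IH].
  have -> : psum X 0 = cst 0 by apply: funext => w; rewrite psum0.
  exact: bmf_cst.
have -> : psum X n.+1 = psum X n \+ X n by apply: funext => w; rewrite psumS.
exact: bmfD (bmfX n).
Qed.

Lemma bmf_pow (f : T -> R) k : bmf f -> bmf (fun w => f w ^+ k).
Proof.
move=> bf; elim: k => [|k IH].
  have -> : (fun w => f w ^+ 0) = cst 1 by apply: funext => w; rewrite expr0.
  exact: bmf_cst.
have -> : (fun w => f w ^+ k.+1) = (fun w => f w ^+ k) \* f.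
  by apply: funext => w /=; rewrite exprSr.
exact: bmfM.
Qed.

Lemma psum_le n w : `|psum X n w| <= n%:R.
Proof.
elim: n => [|n IH]; first by rewrite psum0 normr0.
rewrite psumS (le_trans (ler_normD _ _))// -natr1 lerD//.
Qed.

Lemma ES2 n : Ex P (fun w => psum X n w ^+ 2) <= n%:R.
Proof.
elim: n => [|n IH].
  have -> : (fun w => psum X 0 w ^+ 2) = cst 0.
    by apply: funext => w; rewrite psum0 expr0n.
  by rewrite Ex_cst.
have bS2 := bmf_pow 2 (bmf_psum n).
have bSX : bmf (psum X n \* X n) by apply: bmfM; [exact: bmf_psum|exact: bmfX].
have bX2 := bmf_pow 2 (bmfX n).
have -> : (fun w => psum X n.+1 w ^+ 2) = (fun w => psum X n w ^+ 2) \+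
   ((fun w => 2 * (psum X n \* X n) w) \+ (fun w => X n w ^+ 2)).
  by apply: funext => w /=; rewrite psumS; ring.
rewrite ExD //; last by apply: bmfD => //; exact: bmfZ.
rewrite ExD //; last exact: bmfZ.
have -> : Ex P (fun w => 2 * (psum X n \* X n) w) = 2 * Ex P (psum X n \* X n).
  exact: ExZ.
rewrite m1 mulr0 add0r -natr1 lerD //.
have -> : (1 : R) = Ex P (cst 1) by rewrite Ex_cst.
apply: Ex_le => // [|w]; first exact: bmf_cst.
rewrite /= -real_normK ?num_real //; exact: exprn_ile1.
Qed.

Lemma ES4 n : Ex P (fun w => psum X n w ^+ 4) <= 6 * n%:R ^+ 2.
Proof.
elim: n => [|n IH].
  have -> : (fun w => psum X 0 w ^+ 4) = cst 0.
    by apply: funext => w; rewrite psum0 expr0n.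
  by rewrite Ex_cst expr0n /= mulr0.
have bS := bmf_psum n.
have bXn := bmfX n.
have b1 : bmf ((fun w => psum X n w ^+ 3) \* X n) by apply: bmfM => //; exact: bmf_pow.
have b2 : bmf ((fun w => psum X n w ^+ 2) \* (fun w => X n w ^+ 2)) by apply: bmfM; exact: bmf_pow.
have b3 : bmf (psum X n \* (fun w => X n w ^+ 3)) by apply: bmfM => //; exact: bmf_pow.
have b4 := bmf_pow 4 bXn.
have b0 := bmf_pow 4 bS.
have -> : (fun w => psum X n.+1 w ^+ 4) = (fun w => psum X n w ^+ 4) \+
   ((fun w => 4 * ((fun w => psum X n w ^+ 3) \* X n) w) \+
   ((fun w => 6 * ((fun w => psum X n w ^+ 2) \* (fun w => X n w ^+ 2)) w) \+
   ((fun w => 4 * (psum X n \* (fun w => X n w ^+ 3)) w) \+ (fun w => X n w ^+ 4)))).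
  by apply: funext => w /=; rewrite psumS; ring.
rewrite ExD //; last by repeat apply: bmfD => //; exact: bmfZ.
rewrite ExD //; last by repeat apply: bmfD => //; exact: bmfZ.
rewrite ExD //; last by repeat apply: bmfD => //; exact: bmfZ.
rewrite ExD //; last exact: bmfZ.
have -> : Ex P (fun w => 4 * ((fun w => psum X n w ^+ 3) \* X n) w) = 4 * Ex P ((fun w => psum X n w ^+ 3) \* X n).
  exact: ExZ.
have -> : Ex P (fun w => 6 * ((fun w => psum X n w ^+ 2) \* (fun w => X n w ^+ 2)) w) =
   6 * Ex P ((fun w => psum X n w ^+ 2) \* (fun w => X n w ^+ 2)).
  exact: ExZ.
have -> : Ex P (fun w => 4 * (psum X n \* (fun w => X n w ^+ 3)) w) = 4 * Ex P (psum X n \* (fun w => X n w ^+ 3)).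
  exact: ExZ.
rewrite m3 mulr0 add0r.
have h2 : Ex P ((fun w => psum X n w ^+ 2) \* (fun w => X n w ^+ 2)) <= n%:R.
  apply: le_trans (ES2 n); apply: Ex_le => //; first exact: bmf_pow.
  move=> w /=; rewrite ler_piMr ?sqr_ge0 //.
  by rewrite -real_normK ?num_real //; apply: exprn_ile1.
have h3 : Ex P (psum X n \* (fun w => X n w ^+ 3)) <= n%:R.
  have -> : (n%:R : R) = Ex P (cst n%:R) by rewrite Ex_cst.
  apply: Ex_le => //; first exact: bmf_cst.
  move=> w /=; apply: le_trans (ler_norm _) _.
  rewrite normrM normrX; apply: le_trans (psum_le n w).
  by apply: ler_piMr => //; apply: exprn_ile1.
have h4 : Ex P (fun w => X n w ^+ 4) <= 1.
  have -> : (1 : R) = Ex P (cst 1) by rewrite Ex_cst.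
  apply: Ex_le => //; first exact: bmf_cst.
  move=> w /=; apply: le_trans (ler_norm _) _.
  by rewrite normrX; apply: exprn_ile1.
have hn : (0 : R) <= n%:R by [].
rewrite -natr1.
nra.
all: exact: bmfZ.
Qed.

Lemma PF (eps : R) n : 0 < eps -> (0 < n)%N ->
  (P [set w | (psum X n w < - (eps * n%:R))%R] <= ((6 / eps ^+ 4) / n%:R ^+ 2)%:E)%E.
Proof.
move=> e0 n0.
set A := [set w | psum X n w < - (eps * n%:R)].
have mA : measurable A by apply: meas_lt; case: (bmf_psum n).
have nR : (0 : R) < n%:R by rewrite ltr0n.
set c := (eps * n%:R) ^+ 4.
have c0 : 0 < c by rewrite exprn_gt0 // mulr_gt0.
have key : c * fine (P A) <= 6 * n%:R ^+ 2.
  apply: le_trans (ES4 n).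
  rewrite -Ex_indic // -ExZ; last exact: bmf_indic.
  apply: Ex_le; [exact/bmfZ/bmf_indic|exact/bmf_pow/bmf_psum|].
  move=> w; rewrite indicE; case: (boolP (w \in A)) => [|_]; last first.
    by rewrite mulr0 -[4%N]/(2 * 2)%N exprM sqr_ge0.
  rewrite inE /A /= => hw; rewrite mulr1 /c.
  have e1 : 0 < eps * n%:R by rewrite mulr_gt0.
  set y := psum X n w in hw *; set e := eps * n%:R in hw e1 *.
  have h2 : e ^+ 2 <= y ^+ 2 by nra.
  have -> : e ^+ 4 = (e ^+ 2) ^+ 2 by rewrite -exprM.
  have -> : y ^+ 4 = (y ^+ 2) ^+ 2 by rewrite -exprM.
  have : 0 <= e ^+ 2 by apply: sqr_ge0.
  nra.
rewrite -(fineK (fin_num_measure P A mA)) lee_fin.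
rewrite ler_pdivlMr ?exprn_gt0 // mulrC ler_pdivlMr ?exprn_gt0 //.
have e : c * fine (P A) = n%:R ^+ 2 * (n%:R ^+ 2 * fine (P A) * eps ^+ 4).
  by rewrite /c; ring.
rewrite -(ler_pM2l (exprn_gt0 2 nR)) -e [leRHS]mulrC; exact: key.
Qed.

Lemma PF' (eps : R) n : 0 < eps ->
  (P [set w | (psum X n w < - (eps * n%:R))%R] <=
     ((24 / eps ^+ 4) * ((n.+1)%:R ^+ 2)^-1)%:E)%E.
Proof.
move=> e0; have c0 : 0 <= 24 / eps ^+ 4 by rewrite divr_ge0 // exprn_ge0 // ltW.
case: n => [|n].
  have -> : [set w | (psum X 0 w < - (eps * 0%:R))%R] = set0.
    by apply/seteqP; split => w //=; rewrite psum0 mulr0 oppr0 ltxx.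
  by rewrite measure0 lee_fin mulr_ge0 // invr_ge0 exprn_ge0.
apply: (le_trans (PF e0 (ltn0Sn n))); rewrite lee_fin.
have nR : (1 : R) <= n.+1%:R by rewrite ler1n.
rewrite -[(n.+2)%:R]natr1.
set a := n.+1%:R in nR *.
have a0 : 0 < a by apply: lt_le_trans nR.
have ep : 0 < eps ^+ 4 by rewrite exprn_gt0.
set e4 := eps ^+ 4 in ep *.
have -> : 24 / e4 * ((a + 1) ^+ 2)^-1 = (6 / e4) * (4 / (a + 1) ^+ 2).
  by field; apply/andP; split; rewrite gt_eqF // ?exprn_gt0 // ltr_wpDr.
apply: ler_wpM2l; first by rewrite divr_ge0 // ltW.
rewrite ler_pdivlMr ?exprn_gt0 ?ltr_wpDr // mulrC ler_pdivrMr ?exprn_gt0 //.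
nra.
Qed.

Lemma series_PF (eps : R) : 0 < eps ->
  (\sum_(n <oo) P [set w | (psum X n w < - (eps * n%:R))%R] < +oo)%E.
Proof.
move=> e0; set c := 24 / eps ^+ 4.
apply: (@le_lt_trans _ _ (2 * c)%:E); last exact: ltry.
apply: lime_le; first by apply: is_cvg_nneseries => n _ _; exact: measure_ge0.
apply: nearW => k /=.
rewrite big_mkord.
have h : (\sum_(i < k) P [set w | (psum X i w < - (eps * i%:R))%R] <=
    \sum_(i < k) ((c * (i.+1%:R ^+ 2)^-1)%:E))%E.
  by apply: lee_sum => i _; exact: PF'.
apply: le_trans h _.
rewrite sumEFin lee_fin -mulr_sumr mulrC.
apply: ler_wpM2r; first by rewrite divr_ge0 // exprn_ge0 // ltW.
apply: le_trans (sum_inv_sq k) _.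
by rewrite lerBlDr lerDl mulr_ge0 // invr_ge0.
Qed.

Lemma slln_ae (eps : R) : 0 < eps ->
  {ae P, forall w, exists N, forall n, (N <= n)%N -> - (eps * n%:R) <= psum X n w}.
Proof.
move=> e0.
set F := fun n => [set w | (psum X n w < - (eps * n%:R))%R].
have mF : forall n, measurable (F n) by move=> n; apply: meas_lt; case: (bmf_psum n).
have BC : P (lim_sup_set F) = 0%E := lim_sup_set_cvg0 mF (series_PF e0).
exists (lim_sup_set F); split => //.
  by apply: bigcapT_measurable => k; apply: bigcup_measurable => j _; exact: mF.
move=> w /= hw n _ /=; apply: contrapT => hn; apply: hw; exists n => j nj.
rewrite leNgt; apply/negP => hj; apply: hn; exists j => //.
Qed.

End SLLN.


Lemma bmf_psum_gen {R : realType} {d : measure_display} {T : measurableType d}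
  (F : nat -> T -> R) n : (forall t, bmf (F t)) -> bmf (psum F n).
Proof.
move=> bF; elim: n => [|n IH].
  have -> : psum F 0 = cst 0 by apply: funext => w; rewrite psum0.
  exact: bmf_cst.
have -> : psum F n.+1 = psum F n \+ F n by apply: funext => w; rewrite psumS.
exact: bmfD.
Qed.

Lemma Ex_psum {R : realType} {d : measure_display} {T : measurableType d}
  (P : probability T R) (F : nat -> T -> R) n : (forall t, bmf (F t)) ->
  Ex P (psum F n) = \sum_(t < n) Ex P (F t).
Proof.
move=> bF; elim: n => [|n IH].
  have -> : psum F 0 = cst 0 by apply: funext => w; rewrite psum0.
  by rewrite Ex_cst big_ord0.
have -> : psum F n.+1 = psum F n \+ F n by apply: funext => w; rewrite psumS.
by rewrite ExD ?IH ?big_ord_recr //; exact: bmf_psum_gen.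
Qed.

Lemma boolR_indic {R : realType} {T : Type} (f : T -> bool) w :
  (f w)%:R = \1_[set x | f x] w :> R.
Proof.
rewrite indicE; case: (boolP (f w)) => h.
  by rewrite mem_set.
by rewrite memNset //; exact/negP.
Qed.

Lemma simp_psum {R : realType} {d : measure_display} {T : measurableType d}
  (S : set (set T)) (X : nat -> T -> R) n :
  (forall t, (t < n)%N -> simp S (X t)) -> simp S (psum X n).
Proof.
move=> sX.
have := @simp_sum R d T S 'I_n (index_enum 'I_n) (fun t : 'I_n => X t) (fun t => sX t (ltn_ord t)).
by move=> /simp_ext; apply => w; rewrite /psum.
Qed.

Lemma mart_cond {R : realType} {d : measure_display} {T : measurableType d}
  (P : probability T R) (S : nat -> set (set T)) (X : nat -> T -> R) :
  (forall n A, S n A -> measurable A) ->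
  (forall n A B, S n A -> S n B -> S n (A `&` B)) ->
  (forall n, bmf (X n)) ->
  (forall n A, S n A -> Ex P (\1_A \* X n) = 0) ->
  (forall n t, (t < n)%N -> simp (S n) (X t)) ->
  (forall n, Ex P (psum X n \* X n) = 0) /\
  (forall n, Ex P ((fun w => psum X n w ^+ 3) \* X n) = 0).
Proof.
move=> Sm SI bX base sX; split => n.
  apply: (simp_mart (Sm n)) => //; first exact: base.
  exact: (simp_psum (sX n)).
apply: (simp_mart (Sm n)) => //; first exact: base.
have sP := simp_psum (sX n).
apply: (simp_ext (simp_mul (SI n) (simp_mul (SI n) sP sP) sP)).
by move=> w /=; rewrite !exprSr expr0 mul1r.
Qed.

Lemma ind_comb_bound {R : realType} {T : Type} (B C : set T) (c : R) w :
  0 <= c <= 1 -> `|\1_B w - c * \1_C w| <= 1.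
Proof.
move=> /andP[c0 c1]; rewrite !indicE.
case: (w \in B); case: (w \in C) => /=; rewrite ler_norml; apply/andP; split; lra.
Qed.

Lemma Ex_comb {R : realType} {d : measure_display} {T : measurableType d}
  (P : probability T R) (A B C : set T) (c : R) :
  measurable A -> measurable B -> measurable C ->
  Ex P (\1_A \* (fun w => \1_B w - c * \1_C w)) =
  fine (P (A `&` B)) - c * fine (P (A `&` C)).
Proof.
move=> mA mB mC.
have -> : \1_A \* (fun w => \1_B w - c * \1_C w) =
  \1_(A `&` B) \+ (fun w => (- c) * \1_(A `&` C) w).
  by apply: funext => w /=; rewrite !indicI /=; ring.
rewrite ExD; last 2 first.
- by apply: bmf_indic; exact: measurableI.
- by apply: bmfZ; apply: bmf_indic; exact: measurableI.
have -> : Ex P (fun w => (- c) * \1_(A `&` C) w) = (- c) * Ex P (\1_(A `&` C)).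
  by apply: ExZ; apply: bmf_indic; exact: measurableI.
by rewrite !Ex_indic ?mulNr //; exact: measurableI.
Qed.

Lemma sigmaI {T : Type} (G : set (set T)) A B :
  <<s G >> A -> <<s G >> B -> <<s G >> (A `&` B).
Proof.
move=> hA hB.
have hC : forall X, <<s G >> X -> <<s G >> (~` X).
  by move=> X hX; rewrite -setTD; exact: sigma_algebraCD.
have -> : A `&` B = ~` (\bigcup_k (fun k => if k is 0%N then ~` A else ~` B) k).
  apply/seteqP; split => w /=.
    by move=> [wA wB] [[|k] _ /=].
  move=> h; split; apply: contrapT => h'; apply: h.
    by exists 0%N.
  by exists 1%N.
apply: (hC); apply: sigma_algebra_bigcup => -[|k]; exact: (hC).
Qed.

Lemma sigmaT {T : Type} (G : set (set T)) : <<s G >> setT.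
Proof. by have := @sigma_algebraCD T setT G set0 (@sigma_algebra0 T setT G); rewrite setD0. Qed.

Section Model.
Context {R : realType} {d : measure_display} {T : measurableType d} (P : probability T R).
Variables (pi lamb : R) (Y : nat -> T -> bool) (p lam : nat -> T -> R).
Hypothesis pi01 : 0 < pi < 1.
Hypothesis lamb01 : 0 <= lamb <= 1.
Hypothesis mY : forall t, measurable [set w | Y t w = true].
Hypothesis mp : forall t, measurable_fun setT (p t).
Hypothesis mlam : forall t, measurable_fun setT (lam t).
Hypothesis iid : forall (n : nat) (bs : nat -> bool),
  P [set w | forall s, (s < n)%N -> Y s w = bs s] =
  (\prod_(s < n) (if bs s then 1 - pi else pi))%:E.
Hypothesis cnd : forall t A, cond_sigma Y p lam t A ->
  P (A `&` [set w | Y t w = false] `&` [set w | p t w <= lamb]) =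
  (lamb%:E * P (A `&` [set w | Y t w = false]))%E.

Definition Yf t := [set w | Y t w = false].
Definition Zs t := Yf t `&` [set w | p t w <= lamb].
Definition X1 t w := \1_(Zs t) w - lamb * \1_(Yf t) w.
Definition X2 t w := \1_(Yf t) w - pi * \1_setT w.

Lemma mYb t b : measurable [set w | Y t w = b].
Proof.
case: b => //; rewrite (_ : [set w | Y t w = false] = ~` [set w | Y t w = true]).
  exact/measurableC/mY.
by apply/seteqP; split => w /=; case: (Y t w).
Qed.

Lemma mYf t : measurable (Yf t). Proof. exact: mYb. Qed.

Lemma mZs t : measurable (Zs t).
Proof. by apply: measurableI; [exact: mYf | exact: meas_le]. Qed.

Lemma bmfX1 t : bmf (X1 t).
Proof.
split.
  apply: measurable_funB; first exact/measurable_indic/mZs.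
  by apply: measurable_funM => //; exact/measurable_indic/mYf.
by exists 1 => w; apply: ind_comb_bound.
Qed.

Lemma bmfX2 t : bmf (X2 t).
Proof.
split.
  apply: measurable_funB; first exact/measurable_indic/mYf.
  by apply: measurable_funM => //; exact/measurable_indic.
exists 1 => w; apply: ind_comb_bound.
by case/andP: pi01 => h1 h2; rewrite ltW // ltW.
Qed.

Lemma csig_meas t A : cond_sigma Y p lam t A -> measurable A.
Proof.
apply: smallest_sub; first exact: sigma_algebra_measurable.
move=> B [[s [b ->]] | [[[s [x [_ ->]]] | [s [x [_ ->]]]] | [s [_ ->]]]].
- exact: mYb.
- exact: meas_le.
- exact: meas_le.
- rewrite (_ : [set w | decision p lam s w] = [set w | (p s \- lam s) w <= 0]).
    by apply: meas_le; exact: measurable_funB.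
  by apply/seteqP; split => w /=; rewrite /decision subr_le0.
Qed.

Lemma csigI t A B : cond_sigma Y p lam t A -> cond_sigma Y p lam t B ->
  cond_sigma Y p lam t (A `&` B).
Proof. exact: sigmaI. Qed.

Lemma csigT t : cond_sigma Y p lam t setT.
Proof. exact: sigmaT. Qed.

Lemma csig_Yf s t : cond_sigma Y p lam t (Yf s).
Proof. by apply: sub_sigma_algebra; left; exists s, false. Qed.

Lemma csig_Zs s t : (s < t)%N -> cond_sigma Y p lam t (Zs s).
Proof.
move=> st; apply: csigI; first exact: csig_Yf.
by apply: sub_sigma_algebra; right; left; left; exists s, lamb.
Qed.

Lemma X1_simp n t : (t < n)%N -> simp (cond_sigma Y p lam n) (X1 t).
Proof.
move=> tn.
have h1 : simp (cond_sigma Y p lam n) (\1_(Zs t) : T -> R) := simpI (csig_Zs tn).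
have h2 : simp (cond_sigma Y p lam n) (fun w => (- lamb) * \1_(Yf t) w).
  by apply: simpZ; apply: simpI; exact: csig_Yf.
have := simpD h1 h2.
move=> /simp_ext; apply => w; by rewrite /X1 /= mulNr.
Qed.

Lemma X1_base n A : cond_sigma Y p lam n A -> Ex P (\1_A \* X1 n) = 0.
Proof.
move=> hA; rewrite /X1 Ex_comb; [|exact: csig_meas hA|exact: mZs|exact: mYf].
rewrite /Zs setIA cnd // /Yf /= fineM //= ?subrr //.
apply: fin_num_measure; apply: measurableI; [exact: csig_meas hA|exact: mYb].
Qed.

Definition ext n (bs : {ffun 'I_n -> bool}) (s : nat) : bool :=
  if insub s is Some o then bs o else false.

Lemma ext_val n (bs : {ffun 'I_n -> bool}) (o : 'I_n) : ext bs o = bs o.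
Proof. by rewrite /ext valK. Qed.

Definition Cyl n (bs : {ffun 'I_n -> bool}) := [set w | forall s : 'I_n, Y s w = bs s].
Arguments Cyl : clear implicits.

Lemma CylE n bs : Cyl n bs = [set w | forall s, (s < n)%N -> Y s w = ext bs s].
Proof.
apply/seteqP; split => w /= h.
  by move=> s sn; have := h (Ordinal sn); rewrite -[s]/(val (Ordinal sn)) ext_val.
by move=> o; rewrite -ext_val; exact: h (ltn_ord o).
Qed.

Lemma mCyl n bs : measurable (Cyl n bs).
Proof.
rewrite CylE (_ : [set w | _] = \bigcap_s [set w | (s < n)%N -> Y s w = ext bs s]).
  apply: bigcapT_measurable => s; case: (ltnP s n) => sn.
    rewrite (_ : [set w | _] = [set w | Y s w = ext bs s]); first exact: mYb.
    by apply/seteqP; split => w /=; [apply|move=> h _].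
  rewrite (_ : [set w | _] = setT) //.
  by apply/seteqP; split => w //= _; rewrite ltnNge sn.
by apply/seteqP; split => w /= h s; [move=> _; exact: h|exact: h].
Qed.

Lemma P_Cyl n bs :
  P (Cyl n bs) = (\prod_(s < n) (if bs s then 1 - pi else pi))%:E.
Proof. by rewrite CylE iid; congr EFin; apply: eq_bigr => s _; rewrite ext_val. Qed.

Lemma P_CylYf n bs :
  P (Cyl n bs `&` Yf n) = (pi * \prod_(s < n) (if bs s then 1 - pi else pi))%:E.
Proof.
pose bs' := fun s => if s == n then false else ext bs s.
have -> : Cyl n bs `&` Yf n = [set w | forall s, (s < n.+1)%N -> Y s w = bs' s].
  rewrite CylE; apply/seteqP; split => w /=.
    move=> [hC hY] s; rewrite ltnS leq_eqVlt => /orP[/eqP ->|sn].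
      by rewrite /bs' eqxx.
    by rewrite /bs' ltn_eqF //; exact: hC.
  move=> h; split.
    move=> s sn; rewrite h; last exact: ltnW.
    by rewrite /bs' ltn_eqF.
  by rewrite /Yf /= h // /bs' eqxx.
rewrite iid big_ord_recr /= /bs' eqxx mulrC; congr (_ * _)%:E.
by apply: eq_bigr => s _; rewrite /= ltn_eqF // ext_val.
Qed.

Definition Scyl n : set (set T) := [set A | A = set0 \/ exists bs, A = Cyl n bs].

Lemma Scyl_meas n A : Scyl n A -> measurable A.
Proof. by case=> [->|[bs ->]] //; exact: mCyl. Qed.

Lemma Scyl_I n A B : Scyl n A -> Scyl n B -> Scyl n (A `&` B).
Proof.
case=> [->|[bs ->]]; first by left; rewrite set0I.
case=> [->|[bs' ->]]; first by left; rewrite setI0.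
case: (eqVneq bs bs') => [<-|ne]; first by right; exists bs; rewrite setIid.
left; have /existsNP [s hs] : ~ (forall s, bs s = bs' s).
  by move=> h; move/eqP: ne; apply; apply/ffunP.
by apply/seteqP; split => w // [h1 h2]; apply: hs; rewrite -h1 -h2.
Qed.

Lemma X2_base n A : Scyl n A -> Ex P (\1_A \* X2 n) = 0.
Proof.
move=> hA; rewrite /X2 Ex_comb ?setIT; [|exact: Scyl_meas hA|exact: mYf|by []].
case: hA => [->|[bs ->]]; first by rewrite set0I measure0 /= mulr0 subrr.
by rewrite P_CylYf P_Cyl /= subrr.
Qed.

Lemma ind_Cyl n bs w : \1_(Cyl n bs) w = (bs == [ffun s : 'I_n => Y s w])%:R :> R.
Proof.
rewrite indicE; case: (eqVneq bs [ffun s : 'I_n => Y s w]) => [->|ne].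
  by rewrite mem_set //= => s; rewrite ffunE.
by rewrite memNset //= => h; move/eqP: ne; apply; apply/ffunP => s; rewrite ffunE h.
Qed.

Lemma sumCyl_Yf n (i : 'I_n) w : \1_(Yf i) w =
  \sum_(bs : {ffun 'I_n -> bool}) ((~~ bs i)%:R * \1_(Cyl n bs) w) :> R.
Proof.
under eq_bigr do rewrite ind_Cyl.
rewrite (bigD1 [ffun s : 'I_n => Y s w]) //= eqxx mulr1 big1 ?addr0; last first.
  by move=> bs /negbTE ->; rewrite mulr0.
rewrite ffunE indicE /Yf; case: (boolP (Y i w)) => h.
  by rewrite memNset //= h.
by rewrite mem_set //=; move/negbTE: h.
Qed.

Lemma sumCyl_T n w : \1_setT w =
  \sum_(bs : {ffun 'I_n -> bool}) \1_(Cyl n bs) w :> R.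
Proof.
under eq_bigr do rewrite ind_Cyl.
rewrite (bigD1 [ffun s : 'I_n => Y s w]) //= eqxx big1 ?addr0; last first.
  by move=> bs /negbTE ->.
by rewrite indicE mem_set.
Qed.

Lemma Scyl_Cyl n bs : Scyl n (Cyl n bs).
Proof. by right; exists bs. Qed.

Lemma simp_Yf n (i : 'I_n) : simp (Scyl n) (\1_(Yf i) : T -> R).
Proof.
have := @simp_sum R d T (Scyl n) _ (index_enum {ffun 'I_n -> bool})
  (fun bs w => (~~ bs i)%:R * \1_(Cyl n bs) w)
  (fun bs => simpZ _ (simpI (Scyl_Cyl bs))).
by move=> /simp_ext; apply => w; rewrite sumCyl_Yf.
Qed.

Lemma simp_T n : simp (Scyl n) (\1_setT : T -> R).
Proof.
have := @simp_sum R d T (Scyl n) _ (index_enum {ffun 'I_n -> bool})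
  (fun bs w => \1_(Cyl n bs) w) (fun bs => simpI (Scyl_Cyl bs)).
by move=> /simp_ext; apply => w; rewrite (sumCyl_T n).
Qed.

Lemma X2_simp n t : (t < n)%N -> simp (Scyl n) (X2 t).
Proof.
move=> tn; have h1 := simp_Yf (Ordinal tn).
have h2 : simp (Scyl n) (fun w => (- pi) * \1_setT w) by apply: simpZ; exact: simp_T.
have := simpD h1 h2.
by move=> /simp_ext; apply => w; rewrite /X2 /= mulNr.
Qed.

End Model.


Lemma liminf_lb {R : realType} (u : nat -> R) c :
  (forall e, 0 < e -> exists N, forall n, (N <= n)%N -> c - e <= u n) ->
  (c%:E <= limn_einf (fun n => (u n)%:E))%E.
Proof.
move=> h; apply/lee_addgt0Pr => e e0.
have [N hN] := h e e0.
have h2 : ((c - e)%:E <= limn_einf (fun n => (u n)%:E))%E.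
  rewrite limn_einf_lim; apply: lime_ge; first exact: is_cvg_einfs.
  exists N => // m /= Nm; apply: le_ereal_inf_tmp => _ [k /= mk <-].
  by rewrite lee_fin; apply: hN; exact: leq_trans Nm mk.
have := leeD2r e%:E h2.
by rewrite -EFinD subrK.
Qed.

Unset Implicit Arguments.

Theorem theorem1 (R : realType) (d : measure_display) (T : measurableType d)
  (P : probability T R) (pi : R) (G : R -> R) (beta lamb : R)
  (Y : nat -> T -> bool) (p lam : nat -> T -> R) :
  0 < pi < 1 ->
  {within `[(0:R), 1], continuous G} ->
  {in `[(0:R), 1] &, forall x y, x < y -> G x < G y} ->
  G 0 = 0 -> G 1 = 1 ->
  0 < beta <= 1 ->
  lamb \in `[0, 1] -> G lamb = beta ->
  stationary_protocol P pi G Y p lam ->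
  (forall t, {ae P, forall w, beta <= G (lam t w)}) ->
  forall a b : R, 0 < a -> 0 < b ->
  (forall n : nat, (1 <= n)%N ->
     (\int[P]_w (weighted_regret a b Y p lam n w)%:E >= (a * pi * lamb * n%:R)%:E)%E) /\
  {ae P, forall w,
     ((a * pi * lamb)%:E <=
      limn_einf (fun n : nat => (weighted_regret a b Y p lam n w / n%:R)%:E))%E}.
Proof.
move=> pi01 _ Gmono _ _ _ lambI Glamb [mY [mp [mlam [p01 [lam01 [iid [_ cond]]]]]]]
  Hae a b a0 b0.
have lamb01 : 0 <= lamb <= 1 by move: lambI; rewrite in_itv.
have cnd : forall t A, cond_sigma Y p lam t A ->
    P (A `&` [set w | Y t w = false] `&` [set w | p t w <= lamb]) =
    (lamb%:E * P (A `&` [set w | Y t w = false]))%E.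
  by move=> t A hA; exact: (cond t A lamb hA lamb01).1.
have good : {ae P, forall w, forall t, lamb <= lam t w}.
  apply: ae_foralln => t; apply: filterS (Hae t) => w hb.
  rewrite leNgt; apply/negP => hlt.
  have l01 : lam t w \in `[(0:R), 1] by rewrite in_itv; exact: lam01.
  have := Gmono _ _ l01 lambI hlt; rewrite Glamb => /(le_lt_trans hb).
  by rewrite ltxx.
pose Z := fun t => (\1_(Zs lamb Y p t) : T -> R).
have bZ : forall t, bmf (Z t) by move=> t; exact/bmf_indic/(mZs lamb mY mp).
have PYf : forall t, fine (P [set w | Y t w = false]) = pi.
  move=> t.
  have := @simp_mart R d T P (Scyl Y t) (fun A hA => Scyl_meas mY hA) (X2 pi Y t)
    _ (bmfX2 pi01 mY t) (fun A hA => X2_base mY iid hA) (simp_T Y t).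
  rewrite /X2 Ex_comb //; last exact: mYf.
  rewrite !setTI probability_setT /= mulr1 => /eqP; rewrite subr_eq0 => /eqP.
  by rewrite /Yf.
have PZs : forall t, fine (P (Zs lamb Y p t)) = lamb * pi.
  move=> t; have := cnd t setT (@csigT R d T Y p lam t); rewrite !setTI /Zs /Yf => ->.
  by rewrite fineM //= ?PYf // fin_num_measure //; exact: mYb.
pose Vs := fun t => [set w | ~~ Y t w && decision p lam t w].
pose Ms := fun t => [set w | Y t w && ~~ decision p lam t w].
have mdec : forall t, measurable [set w | decision p lam t w].
  move=> t; rewrite (_ : [set w | decision p lam t w] = [set w | (p t \- lam t) w <= 0]).
    by apply: meas_le; exact: measurable_funB.
  by apply/seteqP; split => w /=; rewrite /decision subr_le0.
have mVs : forall t, measurable (Vs t).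
  move=> t; rewrite (_ : Vs t = [set w | Y t w = false] `&` [set w | decision p lam t w]).
    by apply: measurableI; [exact: mYb|exact: mdec].
  rewrite /Vs; apply/seteqP; split => w /=; case: (Y t w) => //=; first [by move=> h; split | by case].
have mMs : forall t, measurable (Ms t).
  move=> t; rewrite (_ : Ms t = [set w | Y t w = true] `&` ~` [set w | decision p lam t w]).
    by apply: measurableI; [exact: mYb|exact/measurableC/mdec].
  rewrite /Ms; apply/seteqP; split => w /=; case: (Y t w) => //=;
    first [by move=> h; split => //; apply/negP | by case=> _ /negP | by case].
have regE : forall n, weighted_regret a b Y p lam n = fun w =>
    a * psum (fun t => \1_(Vs t)) n w + b * psum (fun t => \1_(Ms t)) n w.
  move=> n; apply: funext => w.
  rewrite /weighted_regret /false_pos /false_neg /psum; congr (_ * _ + _ * _).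
    by apply: eq_bigr => t _; rewrite boolR_indic.
  by apply: eq_bigr => t _; rewrite boolR_indic.
have breg : forall n, bmf (weighted_regret a b Y p lam n).
  move=> n; rewrite regE; apply: bmfD; apply: bmfZ; apply: bmf_psum_gen => t;
    apply: bmf_indic; [exact: mVs|exact: mMs].
have reg_ge : forall n w, (forall t, lamb <= lam t w) ->
    a * psum Z n w <= weighted_regret a b Y p lam n w.
  move=> n w hg; rewrite regE.
  have h1 : a * psum Z n w <= a * psum (fun t => \1_(Vs t)) n w.
    apply: ler_wpM2l; first exact: ltW.
    rewrite /psum; apply: ler_sum => t _; rewrite /Z !indicE.
    case: (boolP (w \in Zs lamb Y p t)) => hz; last by case: (w \in Vs t).
    have hv : Vs t w.
      move: hz; rewrite inE /Zs /Yf /= => -[hY hp].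
      by rewrite /Vs /= hY /decision /= (le_trans hp (hg t)).
    by rewrite mem_set.
  have h2 : 0 <= b * psum (fun t => \1_(Ms t)) n w.
    apply: mulr_ge0; first exact: ltW.
    by rewrite /psum; apply: sumr_ge0 => t _; rewrite indicE.
  lra.
have reg0 : forall n w, 0 <= weighted_regret a b Y p lam n w.
  move=> n w; rewrite regE; apply: addr_ge0; apply: mulr_ge0; try exact: ltW;
    by rewrite /psum; apply: sumr_ge0 => t _; rewrite indicE.
have intE : forall f, bmf f -> (\int[P]_w (f w)%:E = (Ex P f)%:E)%E.
  by move=> f bf; rewrite -Ex_E // unlock.
split.
  move=> n n1.
  have bg : bmf (fun w => a * psum Z n w) := bmfZ a (bmf_psum_gen n bZ).
  have Eg : Ex P (fun w => a * psum Z n w) = a * pi * lamb * n%:R.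
    rewrite ExZ; last exact: bmf_psum_gen.
    rewrite Ex_psum //.
    rewrite (eq_bigr (fun _ => lamb * pi)); last first.
      by move=> t _; rewrite /Z Ex_indic ?PZs //; exact: (mZs lamb mY mp).
    by rewrite sumr_const card_ord -mulr_natr; ring.
  rewrite -Eg -intE //.
  apply: ae_ge0_le_integral => //.
  - move=> w _; rewrite lee_fin; apply: mulr_ge0; first exact: ltW.
    rewrite /psum; apply: sumr_ge0 => t _;
      by rewrite /Z indicE.
  - by apply/measurable_EFinP; case: bg.
  - by move=> w _; rewrite lee_fin.
  - by apply/measurable_EFinP; case: (breg n).
  - by apply: filterS good => w hg _; rewrite lee_fin; exact: reg_ge.
have [m11 m13] := @mart_cond R d T P (fun n => cond_sigma Y p lam n) (X1 lamb Y p)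
  (fun n A hA => csig_meas mY mp mlam hA)
  (fun n A B hA hB => csigI hA hB)
  (bmfX1 lamb01 mY mp) (fun n A hA => X1_base mY mp mlam cnd hA)
  (fun n t tn => X1_simp lamb Y p lam tn).
have [m21 m23] := @mart_cond R d T P (Scyl Y) (X2 pi Y)
  (fun n A hA => Scyl_meas mY hA) (fun n A B hA hB => Scyl_I hA hB)
  (bmfX2 pi01 mY) (fun n A hA => X2_base mY iid hA)
  (fun n t tn => X2_simp pi Y tn).
have kpos : forall k : nat, 0 < (k.+1%:R : R)^-1 by move=> k; rewrite invr_gt0 ltr0n.
have A1 := ae_foralln (fun k => slln_ae (fun t => (bmfX1 lamb01 mY mp t).1)
  (fun t w => ind_comb_bound _ _ w lamb01) m11 m13 (kpos k)).
have pi01' : 0 <= pi <= 1 by case/andP: pi01 => h1 h2; rewrite !ltW.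
have A2 := ae_foralln (fun k => slln_ae (fun t => (bmfX2 pi01 mY t).1)
  (fun t w => ind_comb_bound _ _ w pi01') m21 m23 (kpos k)).
move: good A1 A2; apply: filterS3 => w hg h1 h2.
have hid : forall m, psum Z m w =
    psum (X1 lamb Y p) m w + lamb * psum (X2 pi Y) m w + m%:R * (lamb * pi).
  elim=> [|m IH]; first by rewrite !psum0 mulr0 mul0r !addr0.
  rewrite !psumS IH /X1 /X2 /Z -natr1.
  have -> : \1_setT w = 1 :> R by rewrite indicE mem_set.
  ring.
apply: liminf_lb => e e0.
set k := Num.truncn (2 * a / e).
have hk : 2 * a / e < k.+1%:R := truncnS_gt _.
set eps := (k.+1%:R : R)^-1.
have eps0 : 0 < eps := kpos k.
have he : 2 * a * eps < e.
  have Kp : (0:R) < k.+1%:R by rewrite ltr0n.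
  have hk' : 2 * a < k.+1%:R * e by rewrite -ltr_pdivrMr.
  by rewrite /eps ltr_pdivrMr // [e * _]mulrC.
have [N1 hN1] := h1 k.
have [N2 hN2] := h2 k.
exists (maxn (maxn N1 N2) 1) => n hn.
rewrite !geq_max in hn; case/andP: hn => /andP[hn1 hn2] hn3.
have nR : (0 : R) < n%:R by rewrite ltr0n.
have s1 := hN1 n hn1; have s2 := hN2 n hn2.
rewrite -/eps in s1 s2.
have hr := reg_ge n w hg.
rewrite hid in hr.
rewrite ler_pdivlMr //.
set r := weighted_regret a b Y p lam n w in hr *.
set S1 := psum (X1 lamb Y p) n w in s1 hr.
set S2 := psum (X2 pi Y) n w in s2 hr.
set m := n%:R in nR s1 s2 hr *.
case/andP: lamb01 => l0 l1.
have en : 0 <= eps * m by rewrite mulr_ge0 // ltW.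
have hl2 : - (eps * m) <= lamb * S2 by nra.
have hz : m * (lamb * pi) - 2 * (eps * m) <= S1 + lamb * S2 + m * (lamb * pi) by lra.
have hz2 : a * (m * (lamb * pi) - 2 * (eps * m)) <= r.
  apply: le_trans hr; apply: ler_wpM2l; [exact: ltW | exact: hz].
have : 2 * a * eps * m <= e * m by apply: ler_wpM2r; [exact: ltW | exact: ltW].
nra.
Qed.
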